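(* If $\mathcal{K}$ and $\mathcal{J}$ are elements of infinite order in $\mathcal{C}$ and $\Delta([\mathcal{K}],[\mathcal{J}])=0$, then there exist $a,b\in\mathbb{Z}$ such that $a\mathcal{K}=b\mathcal{J}\neq0$.
   Context: $\mathcal{C}$ is the smooth knot concordance group (knots in $S^3$ modulo smooth concordance, operation connected sum, inverse $-\mathcal{K}$ the reverse mirror image). $d(\mathcal{K},\mathcal{J})=g_4(\mathcal{K}\,\#\,-\mathcal{J})$, $g_4$ the smooth four-genus. Let $\mathcal{C}^\circ=\mathcal{C}\setminus\{0\}$; $\mathcal{K}\sim'\mathcal{J}$ if there exist $\mathcal{M}\in\mathcal{C}$ and $r,s\in\mathbb{Z}$ with $\mathcal{K}=r\mathcal{M}$, $\mathcal{J}=s\mathcal{M}$; $\sim$ is the equivalence relation generated by $\sim'$; $\mathbb{P}(\mathcal{C})=\mathcal{C}^\circ/\sim$ with classes $[\mathcal{K}]$. Define $\delta([\mathcal{K}],[\mathcal{J}])=\min\{d(\mathcal{K}',\mathcal{J}'):\mathcal{K}'\in[\mathcal{K}],\mathcal{J}'\in[\mathcal{J}]\}$ and $\Delta([\mathcal{K}],[\mathcal{J}])=\min\sum_{i=0}^{n-1}\delta([\mathcal{K}_i],[\mathcal{K}_{i+1}])$ over all finite sequences of classes with $[\mathcal{K}_0]=[\mathcal{K}]$, $[\mathcal{K}_n]=[\mathcal{J}]$. *)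

(* Defs.v *)
(* The smooth knot concordance group C is modelled abstractly:
   an abelian group (zmodType) G together with the smooth four-genus
   g4 : G -> nat, of which only the property "g4 x = 0 <-> x = 0" (a knot is
   slice iff it is zero in C) is assumed. *)
From HB Require Import structures.
From mathcomp Require Import all_boot all_order all_algebra.
From Stdlib Require Import Relations ClassicalEpsilon.
Set Implicit Arguments. Unset Strict Implicit. Unset Printing Implicit Defensive.
Import Order.TTheory GRing.Theory Num.Theory.
Local Open Scope ring_scope.

(* least element of a set of naturals (arbitrary if the set is empty) *)
Definition natinf (P : nat -> Prop) : nat :=
  epsilon (inhabits 0%N) (fun n => P n /\ forall m, P m -> (n <= m)%N).

Section Concordance.
Variables (G : zmodType) (g4 : G -> nat).

Definition dist (K J : G) : nat := g4 (K - J).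

Definition simp (K J : G) : Prop :=
  K != 0 /\ J != 0 /\ exists (M : G) (r s : int), K = M *~ r /\ J = M *~ s.

Definition sim (K J : G) : Prop :=
  K != 0 /\ J != 0 /\ clos_refl_sym_trans G simp K J.

Definition delta (K J : G) : nat :=
  natinf (fun n => exists K' J', sim K K' /\ sim J J' /\ dist K' J' = n).

Definition Delta (K J : G) : nat :=
  natinf (fun n => exists (x0 : G) (xs : seq G),
    x0 != 0 /\ all (fun x => x != 0) xs /\
    sim K x0 /\ sim (last x0 xs) J /\
    sumn (pairmap delta x0 xs) = n).

Definition infinite_order (K : G) : Prop := forall n : nat, (0 < n)%N -> K *+ n != 0.

End Concordance.

(* Main.v *)
Require Import Defs.
From HB Require Import structures.
From mathcomp Require Import all_boot all_order all_algebra.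
From Stdlib Require Import Relations Classical ClassicalEpsilon.
Import Order.TTheory GRing.Theory Num.Theory.
Local Open Scope ring_scope.

Lemma natinf_spec (P : nat -> Prop) : (exists n, P n) -> P (natinf P).
Proof.
move=> [n Pn].
have ex : exists k, P k /\ forall m, P m -> (k <= m)%N.
  elim/ltn_ind: n Pn => n IH Pn.
  case: (classic (exists m, (m < n)%N /\ P m)) => [[m [lt Pm]]|H].
    exact: IH lt Pm.
  exists n; split => // m Pm; rewrite leqNgt; apply/negP => lt.
  by apply: H; exists m.
rewrite /natinf; exact: (proj1 (epsilon_spec (inhabits 0%N) _ ex)).
Qed.

Section S.
Variables (G : zmodType).

Definition infz (K : G) := forall n : int, n != 0 -> K *~ n != 0.
Definition R (x y : G) := exists a b : int, x *~ a = y *~ b /\ x *~ a != 0.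

Lemma inf_infz K : infinite_order K -> infz K.
Proof.
move=> H [m|m] /= nz.
  apply: H; by case: m nz.
rewrite NegzE mulrNz oppr_eq0; exact: H.
Qed.

Lemma infz_inf K : infz K -> infinite_order K.
Proof.
move=> H n n0; apply: (H (Posz n)).
by case: n n0.
Qed.

Lemma simp_step x y : simp x y -> infz x -> infz y /\ R x y.
Proof.
move=> [x0 [y0 [M [r [s [e1 e2]]]]]] ix; subst x y.
have s0 : s != 0 by apply: contraNneq y0 => ->; rewrite mulr0z.
have iM : infz M.
  move=> n n0; apply: contra (ix n n0) => /eqP H.
  by rewrite -mulrzA mulrC mulrzA H mul0rz.
split.
  move=> n n0; rewrite -mulrzA; apply: iM; by rewrite mulf_neq0.
exists s, r; split; first by rewrite -!mulrzA mulrC.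
exact: ix.
Qed.

Lemma R_sym x y : R x y -> R y x.
Proof. by move=> [a [b [e n]]]; exists b, a; rewrite -e. Qed.

Lemma R_trans x y z : infz x -> R x y -> R y z -> R x z.
Proof.
move=> ix [a [b [e1 n1]]] [c [d [e2 n2]]].
exists (a * c), (b * d); split.
  by rewrite (mulrzA x a c) e1 -(mulrzA y b c) (mulrC b c) (mulrzA y c b) e2 -(mulrzA z d b) (mulrC d b).
apply: ix; rewrite mulf_neq0 //.
  by apply: contraNneq n1 => ->; rewrite mulr0z.
by apply: contraNneq n2 => ->; rewrite mulr0z.
Qed.

Lemma crst_R x y : clos_refl_sym_trans G (@simp G) x y ->
  (infz x <-> infz y) /\ (infz x -> R x y).
Proof.
elim => {x y}.
- move=> x y sxy; split; last by move=> ix; case: (simp_step _ _ sxy ix).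
  split; first by move=> ix; case: (simp_step _ _ sxy ix).
  have syx : simp y x.
    by case: sxy => [a [b [M [r [s [e1 e2]]]]]]; split=> //; split=> //; exists M, s, r.
  by move=> iy; case: (simp_step _ _ syx iy).
- move=> x; split => // ix; exists 1, 1; split => //; exact: ix.
- move=> x y _ [[h1 h2] h3]; split => // iy; apply: R_sym; apply: h3; exact: h2.
- move=> x y z _ [[h1 h2] h3] _ [[h4 h5] h6]; split.
    split => [ix|iz]; [exact: h4 (h1 ix) | exact: h2 (h5 iz)].
  move=> ix; apply: R_trans _ _ _ ix (h3 ix) (h6 (h1 ix)).
Qed.

End S.

Theorem theorem6p2 (G : zmodType) (g4 : G -> nat)
  (g4_zero : forall x : G, g4 x = 0%N <-> x = 0)
  (K J : G) (HK : infinite_order K) (HJ : infinite_order J)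
  (HD : Delta g4 K J = 0%N) :
  exists a b : int, K *~ a = J *~ b /\ K *~ a != 0.
Proof.
have nz : forall x : G, infinite_order x -> x != 0.
  by move=> x /(_ 1%N isT); rewrite mulr1n.
have simrefl : forall x : G, x != 0 -> sim x x.
  by move=> x x0; split => //; split => //; apply: rst_refl.
have crst_sym : forall x y : G, clos_refl_sym_trans G (@simp G) x y ->
    clos_refl_sym_trans G (@simp G) y x by move=> x y; apply: rst_sym.
have dstep : forall x y : G, x != 0 -> y != 0 -> delta g4 x y = 0%N ->
    clos_refl_sym_trans G (@simp G) x y.
  move=> x y x0 y0 hd.
  have := @natinf_spec (fun n => exists K' J', sim x K' /\ sim y J' /\ dist g4 K' J' = n).
  rewrite -/(delta g4 x y) hd; case.
    by exists (dist g4 x y), x, y; split; [exact: simrefl|split; [exact: simrefl|]].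
  move=> K' [J' [[_ [_ c1]] [[_ [_ c2]] d]]].
  move: d; rewrite /dist => /g4_zero /eqP; rewrite subr_eq0 => /eqP e.
  apply: rst_trans c1 _; rewrite e; exact: crst_sym.
have := @natinf_spec (fun n => exists (x0 : G) (xs : seq G),
    x0 != 0 /\ all (fun x => x != 0) xs /\
    sim K x0 /\ sim (last x0 xs) J /\
    sumn (pairmap (delta g4) x0 xs) = n).
rewrite -/(Delta g4 K J) HD; case.
  exists (delta g4 K J), K, [:: J].
  split; first exact: nz.
  split; first by rewrite /= andbT; exact: nz.
  split; first exact: simrefl (nz _ HK).
  split; first exact: simrefl (nz _ HJ).
  by rewrite /= addn0.
move=> x0 [xs [x00 [hall [[_ [_ c1]] [[_ [_ c2]] hs]]]]].
have chain : clos_refl_sym_trans G (@simp G) x0 (last x0 xs).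
  elim: xs x0 x00 hall hs {c1 c2} => [|y ys IH] x x0 /= hall hs.
    exact: rst_refl.
  move/andP: hall => [y0 hall].
  move: hs => /eqP; rewrite addn_eq0 => /andP [/eqP h1 /eqP h2].
  apply: rst_trans (dstep _ _ x0 y0 h1) (IH _ y0 hall h2).
have c : clos_refl_sym_trans G (@simp G) K J.
  by apply: rst_trans c1 _; apply: rst_trans chain c2.
have [_ h] := @crst_R _ _ _ c.
exact: h (@inf_infz _ _ HK).
Qed.
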